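(* Let $n\ge 4$ be even and consider the $[\![n,n-2,2]\!]$ code. Let $G = \tfrac{i}{\sqrt2}(X+Y)$. Let $V = G^{\otimes n}$ if $n \equiv 0 \pmod 4$ and $V = Z_n G^{\otimes n}$ if $n\equiv 2 \pmod 4$. Then $V$ preserves the code space, and, up to a logical Pauli operator and a global phase, acts on the code space as the product of logical $\mathrm{CZ}$ gates between every pair of distinct encoded qubits, $\prod_{1\le i<j\le n-2}\overline{\mathrm{CZ}}_{i,j}$.
   Context: For even $n$, the $[\![n,n-2,2]\!]$ code is the stabilizer code on $n$ qubits with stabilizer generators $X^{\otimes n}$ and $Z^{\otimes n}$, with logical operators $\bar X_j = X_1X_{j+1}$ and $\bar Z_j = Z_{j+1}Z_n$ for $j=1,\dots,n-2$. $\mathrm{CZ} = \mathbb 1 - 2|11\rangle\langle11|$. *)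

(* Defs.v *)
From HB Require Import structures.
From mathcomp Require Import all_boot all_order all_algebra all_field.
Set Implicit Arguments. Unset Strict Implicit. Unset Printing Implicit Defensive.
Import Order.TTheory GRing.Theory Num.Theory.
Local Open Scope ring_scope.

(* Computational basis of n qubits: bit strings x : 'I_n -> bool.
   Qubits are indexed 0..n-1 (paper's qubit k is index k-1). *)
Definition basis (n : nat) := {ffun 'I_n -> bool}.
Definition state (n : nat) := basis n -> algC.
Definition op (n : nat) := basis n -> basis n -> algC.
Definition gate := bool -> bool -> algC.

Definition Ig : gate := fun a b => if a == b then 1 else 0.
Definition Xg : gate := fun a b => if a != b then 1 else 0.
Definition Yg : gate := fun a b =>
  if a == b then 0 else if a then 'i else - 'i.
Definition Zg : gate := fun a b => if a == b then (if a then -1 else 1) else 0.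
Definition Gg : gate := fun a b => 'i / sqrtC 2%:R * (Xg a b + Yg a b).

Definition apply n (A : op n) (psi : state n) : state n :=
  fun x => \sum_(y : basis n) A x y * psi y.
Definition opmul n (A B : op n) : op n :=
  fun x y => \sum_(z : basis n) A x z * B z y.
Definition opid n : op n := fun x y => if x == y then 1 else 0.
Arguments opid n : clear implicits.
Definition opadd n (A B : op n) : op n := fun x y => A x y + B x y.
Definition opscale n (c : algC) (A : op n) : op n := fun x y => c * A x y.

Definition tensor n (g : 'I_n -> gate) : op n :=
  fun x y => \prod_(k : 'I_n) g k (x k) (y k).
Definition onq n (k : nat) (g : gate) : op n :=
  tensor (fun l : 'I_n => if nat_of_ord l == k then g else Ig).
Arguments onq n k g : clear implicits.

(* the [[n,n-2,2]] code: stabilizers X^n and Z^n, code space = +1 eigenspace *)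
Definition inCode n (psi : state n) : Prop :=
  (forall x, apply (tensor (fun _ => Xg)) psi x = psi x) /\
  (forall x, apply (tensor (fun _ => Zg)) psi x = psi x).

Unset Implicit Arguments.

(* logical operators, j = 1..n-2:  Xbar_j = X_1 X_(j+1), Zbar_j = Z_(j+1) Z_n
   (paper's 1-based qubits; here 0-based: qubits 0, j and j, n-1). *)
Definition Xbar n (j : nat) : op n := opmul (onq n 0%N Xg) (onq n j Xg).
Definition Zbar n (j : nat) : op n := opmul (onq n j Zg) (onq n n.-1 Zg).

(* logical CZ_{i,j} = 1 - 2|11><11| = (1 + Zbar_i + Zbar_j - Zbar_i Zbar_j)/2 *)
Definition CZbar n (i j : nat) : op n :=
  opscale (2%:R)^-1
    (opadd (opadd (opid n) (Zbar n i))
           (opadd (Zbar n j) (opscale (-1) (opmul (Zbar n i) (Zbar n j))))).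

Definition allCZbar n : op n :=
  \big[@opmul n/opid n]_(1 <= i < n.-1) \big[@opmul n/opid n]_(i.+1 <= j < n.-1)
     CZbar n i j.

Definition logPauli n (a b : nat -> bool) : op n :=
  \big[@opmul n/opid n]_(1 <= j < n.-1)
     opmul (if a j then Xbar n j else opid n) (if b j then Zbar n j else opid n).

Definition Vop n : op n :=
  if (n %% 4 == 0)%N then tensor (fun _ => Gg)
  else opmul (onq n n.-1 Zg) (tensor (fun _ => Gg)).

(* Main.v *)
Require Import Defs.
From HB Require Import structures.
From mathcomp Require Import all_boot all_order all_algebra all_field.
From mathcomp Require Import zify ring.
Import Order.TTheory GRing.Theory Num.Theory.
Local Open Scope ring_scope.
Set Implicit Arguments. Unset Strict Implicit. Unset Printing Implicit Defensive.

Section Gen.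
Variable n : nat.

Definition isperm (A : op n) (h : basis n -> basis n) (d : basis n -> algC) :=
  forall x y, A x y = if y == h x then d x else 0.

Lemma isperm_ext A h d h' d' : (forall x, h x = h' x) -> (forall x, d x = d' x) ->
  isperm A h d -> isperm A h' d'.
Proof. by move=> eh ed hA x y; rewrite hA eh ed. Qed.

Lemma apply_perm A h d psi x : isperm A h d -> apply A psi x = d x * psi (h x).
Proof.
move=> hA; rewrite /apply (bigD1 (h x)) //= hA eqxx big1 ?addr0 // => y /negbTE hy.
by rewrite hA hy mul0r.
Qed.

Lemma opmul_perm A B h d dB : isperm A id d -> isperm B h dB ->
  isperm (opmul A B) h (fun x => d x * dB x).
Proof.
move=> hA hB x y; rewrite /opmul (bigD1 x) //= hA eqxx big1 ?addr0.
  by rewrite hB; case: eqP => _; rewrite ?mulr0.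
by move=> z /negbTE hz; rewrite hA /= hz mul0r.
Qed.

Lemma opid_perm : isperm (opid n) id (fun _ => 1).
Proof. by move=> x y; rewrite /opid eq_sym. Qed.

Lemma opadd_perm A B dA dB : isperm A id dA -> isperm B id dB ->
  isperm (opadd A B) id (fun x => dA x + dB x).
Proof. by move=> hA hB x y; rewrite /opadd hA hB; case: eqP; rewrite ?addr0. Qed.

Lemma opscale_perm c A dA : isperm A id dA ->
  isperm (opscale c A) id (fun x => c * dA x).
Proof. by move=> hA x y; rewrite /opscale hA; case: eqP; rewrite ?mulr0. Qed.

Lemma big_perm (r : seq nat) (F : nat -> op n) (dF : nat -> basis n -> algC) :
  (forall i, i \in r -> isperm (F i) id (dF i)) ->
  isperm (\big[@opmul n/opid n]_(i <- r) F i) id (fun x => \prod_(i <- r) dF i x).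
Proof.
elim: r => [|a r IH] hF.
  rewrite [X in isperm X _ _]big_nil; by apply: (isperm_ext _ _ opid_perm) => // x; rewrite big_nil.
rewrite [X in isperm X _ _]big_cons; apply: (isperm_ext _ _ (opmul_perm (hF a _) (IH _))) => //.
- by move=> x; rewrite big_cons.
- by rewrite inE eqxx.
- by move=> i hi; apply: hF; rewrite inE hi orbT.
Qed.

Lemma tensor_perm (g : 'I_n -> gate) (f : bool -> bool) (e : 'I_n -> bool -> algC) :
  (forall k a b, g k a b = if b == f a then e k a else 0) ->
  isperm (tensor g) (fun x => [ffun k => f (x k)]) (fun x => \prod_k e k (x k)).
Proof.
move=> hg x y; rewrite /tensor; case: eqP => [->|/eqP hy].
  by apply: eq_bigr => k _; rewrite hg ffunE eqxx.
have [k hk] : exists k, y k != f (x k).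
  apply/existsP; apply: contraR hy => /existsPn h; apply/eqP/ffunP => k.
  rewrite ffunE; apply/eqP; apply/negPn; exact: h.
by rewrite (bigD1 k) //= hg (negbTE hk) mul0r.
Qed.

Definition xb (x : basis n) (j : nat) : bool := [exists i : 'I_n, (val i == j) && x i].
Lemma xbE x (i : 'I_n) : xb x i = x i.
Proof.
apply/existsP/idP => [[j /andP[/eqP /val_inj -> //]]|hi].
by exists i; rewrite eqxx.
Qed.

Definition compl (x : basis n) : basis n := [ffun k => ~~ x k].

Lemma xbC x j : (j < n)%N -> xb (compl x) j = ~~ xb x j.
Proof. move=> hj; have -> : j = val (Ordinal hj) by []. by rewrite !xbE ffunE. Qed.

Lemma onqZ_perm j : (j < n)%N -> isperm (onq n j Zg) id (fun x => (-1) ^+ xb x j).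
Proof.
move=> hj.
have := @tensor_perm (fun l : 'I_n => if val l == j then Zg else Ig) id
   (fun l a => if val l == j then (-1)^+ a else 1).
move=> H; apply: (isperm_ext _ _ (H _)) => [x|x|k a b].
- by apply/ffunP => k; rewrite ffunE.
- rewrite (bigD1 (Ordinal hj)) //= eqxx big1 ?mulr1 ?(xbE x (Ordinal hj)) // => l hl.
  rewrite ifN //; apply: contra hl => /eqP hl; apply/eqP/val_inj; exact: hl.
- by case: (val k == j); case: a; case: b; rewrite /Zg /Ig /= ?expr0 ?expr1.
Qed.

Definition wt (x : basis n) : nat := (\sum_(k : 'I_n) x k)%N.

Lemma tX_perm : isperm (tensor (fun _ => Xg)) compl (fun _ => 1).
Proof.
apply: (isperm_ext _ _ (@tensor_perm (fun _ => Xg) negb (fun _ _ => 1) _)) => // [x|].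
  by rewrite big1.
by move=> k a b; case: a; case: b.
Qed.

Lemma tZ_perm : isperm (tensor (fun _ => Zg)) id (fun x => (-1) ^+ wt x).
Proof.
apply: (isperm_ext _ _ (@tensor_perm (fun _ => Zg) id (fun _ a => (-1) ^+ a) _)) => [x|x|k a b].
- by apply/ffunP => k; rewrite ffunE.
- by rewrite /wt (big_morph (fun k : nat => (-1 : algC) ^+ k) (exprD (-1)) (expr0 (-1))).
- by case: a; case: b; rewrite /Zg /= ?expr0 ?expr1.
Qed.

End Gen.
Unset Implicit Arguments.

Lemma sign_sum (I : Type) (r : seq I) (P : pred I) (F : I -> nat) :
  \prod_(i <- r | P i) (-1 : algC) ^+ F i = (-1) ^+ (\sum_(i <- r | P i) F i)%N.
Proof. by rewrite (big_morph (fun k : nat => (-1 : algC) ^+ k) (exprD (-1)) (expr0 (-1))). Qed.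

Lemma pairs_sign (u : nat -> bool) N k a : (a + k = N)%N ->
  \prod_(a <= i < N) \prod_(i.+1 <= j < N) (-1 : algC) ^+ (u i && u j)
  = (-1) ^+ 'C(\sum_(a <= j < N) u j, 2).
Proof.
elim: k a => [|k IH] a hk.
  rewrite addn0 in hk; subst.
  by rewrite !big_geq.
have ha : (a < N)%N by rewrite -hk addnS ltnS leq_addr.
rewrite big_ltn // [X in _ = (-1) ^+ 'C(X, 2)]big_ltn //.
rewrite IH; last by rewrite -hk addnS addSn.
rewrite sign_sum.
have -> : (\sum_(a.+1 <= j < N) (u a && u j) = u a * \sum_(a.+1 <= j < N) u j)%N.
  by case: (u a) => /=; rewrite ?mul1n ?mul0n // big1.
rewrite -exprD; congr (_ ^+ _).
by case: (u a); rewrite ?mul1n ?mul0n ?add0n // add1n binS bin1 addnC.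
Qed.
Lemma core w b : (b <= 1)%N -> ~~ odd (b + w) -> ((b + w)./2 %% 2 = (w + 'C(w, 2)) %% 2)%N.
Proof.
elim/ltn_ind: w b => [[|[|w]]] IH b hb ho.
- by case: b hb ho => [|[|]].
- by case: b hb ho => [|[|]].
have := IH w (ltnW (ltnSn _)) b hb.
have -> : odd (b + w) = odd (b + w.+2) by rewrite !addnS /= negbK.
move=> /(_ ho).
rewrite !binS bin1 bin0 -!divn2.
set c := 'C(w, 2).
lia.
Qed.
Lemma split_sum (F : nat -> nat) n : (1 < n)%N ->
  (\sum_(0 <= k < n) F k = F 0 + \sum_(1 <= k < n.-1) F k + F n.-1)%N.
Proof.
case: n => [|[|n]] // _.
by rewrite big_ltn // big_nat_recr //= addnA.
Qed.

Definition gG (a : bool) : algC := 'i / sqrtC 2%:R * (1 + (if a then 'i else - 'i)).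
Definition gf := gG false.

Lemma gGE a : gG a = gf * 'i ^+ a.
Proof.
have e : (1 + 'i : algC) = (1 + - 'i) * 'i.
  by rewrite mulrDl mul1r mulNr -expr2 sqrCi opprK addrC.
by case: a; rewrite /gf /gG ?expr0 ?mulr1 // expr1 /= e mulrA.
Qed.

Lemma gf2 : gf ^+ 2 = 'i.
Proof.
rewrite /gf /gG exprMn expr_div_n sqrtCK sqrCi.
have -> : (1 + - 'i) ^+ 2 = - (2%:R) * ('i : algC).
  rewrite sqrrD sqrrN sqrCi expr1n mul1r.
  by rewrite -mulr_natl; ring.
by field.
Qed.
Set Implicit Arguments.

Lemma sgnmod a b : (a %% 2 = b %% 2)%N -> (-1 : algC) ^+ a = (-1) ^+ b.
Proof. by move=> h; rewrite !modn2 in h; rewrite -[LHS]signr_odd h signr_odd. Qed.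

Lemma evenE a : ~~ odd a = (a %% 2 == 0)%N.
Proof. by rewrite modn2; case: odd. Qed.

Lemma iE m : ~~ odd m -> 'i ^+ m = (-1 : algC) ^+ m./2.
Proof. by move=> h; rewrite -{1}(odd_double_half m) (negbTE h) add0n -mul2n exprM sqrCi. Qed.

Lemma gfn m : ~~ odd m -> gf ^+ m = 'i ^+ m./2.
Proof. by move=> h; rewrite -{1}(odd_double_half m) (negbTE h) add0n -mul2n exprM gf2. Qed.

Section Main.
Variable n : nat.

Definition u (x : basis n) j := xb x j (+) xb x n.-1.
Definition w (x : basis n) := (\sum_(1 <= j < n.-1) u x j)%N.

Lemma Zbar_perm j : (j < n)%N -> isperm (Zbar n j) id (fun x => (-1) ^+ u x j).
Proof.
move=> hj; have hN : (n.-1 < n)%N by lia.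
rewrite /Zbar; apply: (isperm_ext _ _ (opmul_perm (onqZ_perm hj) (onqZ_perm hN))) => // x.
by rewrite /u signr_addb.
Qed.

Lemma CZ_perm i j : (i < n)%N -> (j < n)%N ->
  isperm (CZbar n i j) id (fun x => (-1) ^+ (u x i && u x j)).
Proof.
move=> hi hj; rewrite /CZbar.
apply: (isperm_ext _ _ (opscale_perm _ (opadd_perm (opadd_perm (@opid_perm n) (Zbar_perm hi))
   (opadd_perm (Zbar_perm hj) (opscale_perm _ (opmul_perm (Zbar_perm hi) (Zbar_perm hj))))))) => // x.
by case: (u x i); case: (u x j) => /=; rewrite ?expr0 ?expr1; field.
Qed.

Lemma L_perm : (1 < n)%N ->
  isperm (opmul (logPauli n (fun _ => false) (fun _ => true)) (allCZbar n)) id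
    (fun x => (-1) ^+ (w x + 'C(w x, 2))).
Proof.
move=> hn.
have hP : isperm (logPauli n (fun _ => false) (fun _ => true)) id
   (fun x => \prod_(1 <= j < n.-1) (1 * (-1) ^+ u x j)).
  apply: (big_perm (dF := fun j x => 1 * (-1) ^+ u x j)) => j.
  rewrite mem_index_iota => /andP[_ hj]; apply: opmul_perm (@opid_perm n) (Zbar_perm _); lia.
have hC : isperm (allCZbar n) id (fun x => \prod_(1 <= i < n.-1)
    \prod_(i.+1 <= j < n.-1) (-1) ^+ (u x i && u x j)).
  apply: big_perm => i; rewrite mem_index_iota => /andP[_ hi].
  apply: big_perm => j; rewrite mem_index_iota => /andP[_ hj].
  apply: CZ_perm; lia.
apply: (isperm_ext _ _ (opmul_perm hP hC)) => // x.
under eq_bigr do rewrite mul1r.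
rewrite sign_sum (@pairs_sign _ _ (n.-1 - 1)); last by lia.
by rewrite -exprD.
Qed.
End Main.

Section Main2.
Variable n : nat.

Lemma tG_perm : isperm (tensor (fun _ : 'I_n => Gg)) (@compl n)
   (fun x => gf ^+ n * 'i ^+ wt x).
Proof.
apply: (isperm_ext _ _ (@tensor_perm _ (fun _ => Gg) negb (fun _ a => gG a) _)) => // [x|k a b].
  under eq_bigr do rewrite gGE.
  rewrite big_split /= prodr_const card_ord /wt.
  by rewrite (big_morph (fun k : nat => ('i : algC) ^+ k) (exprD 'i) (expr0 'i)).
by case: a; case: b; rewrite /Gg /Xg /Yg /gG /= ?addr0 ?mulr0.
Qed.

Lemma V_perm : (0 < n)%N -> isperm (Vop n) (@compl n)
  (fun x => (if (n %% 4 == 0)%N then 1 else (-1) ^+ xb x n.-1) * (gf ^+ n * 'i ^+ wt x)).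
Proof.
move=> hn; rewrite /Vop; case: ifP => _.
  by apply: (isperm_ext _ _ tG_perm) => // x; rewrite mul1r.
have hN : (n.-1 < n)%N by lia.
exact: (opmul_perm (onqZ_perm hN) tG_perm).
Qed.


Lemma wt_sum (x : basis n) : wt x = (\sum_(0 <= k < n) xb x k)%N.
Proof. by rewrite /wt [RHS]big_mkord; apply: eq_bigr => k _; rewrite xbE. Qed.

Lemma phase (x : basis n) : (1 < n)%N -> ~~ odd n -> ~~ odd (wt x) ->
 (if (n %% 4 == 0)%N then 1 else (-1) ^+ xb x n.-1) * (gf ^+ n * 'i ^+ wt x)
   = gf ^+ n * (-1) ^+ (w x + 'C(w x, 2)).
Proof.
move=> h1 hev hw.
rewrite (iE hw) mulrCA; congr (_ * _).
set m := (\sum_(0 <= k < n) u x k)%N.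
have hm : m = (u x 0 + w x)%N.
  by rewrite /m split_sum // {3}/u addbb addn0.
have hF : if xb x n.-1 then (wt x + m = n)%N else wt x = m.
  rewrite wt_sum /m /u; case: (xb x n.-1).
  - rewrite -big_split /= (eq_bigr (fun _ => 1%N)) ?sum_nat_const_nat ?subn0 ?muln1 //.
    by move=> k _; case: (xb x k).
  - by apply: eq_bigr => k _; rewrite addbF.
have hmev : ~~ odd m.
  move: hw hev; rewrite !evenE; case: (xb x n.-1) hF => hF /eqP hw /eqP hev; apply/eqP; lia.
rewrite hm in hmev; have hc := @core (w x) (u x 0) (leq_b1 (u x 0)) hmev; rewrite -hm in hc.
move: hw hev hc; rewrite !evenE -!divn2.
case: (boolP (n %% 4 == 0)%N) => h4; case: (xb x n.-1) hF => hF /eqP hw /eqP hev hc;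
  rewrite ?mul1r -?exprD; apply: sgnmod; lia.
Qed.

Lemma key (psi : state n) : (1 < n)%N -> ~~ odd n -> inCode psi ->
  forall x, apply (Vop n) psi x = gf ^+ n * (-1) ^+ (w x + 'C(w x, 2)) * psi x.
Proof.
move=> h1 hev [hX hZ] x.
have h0 : (0 < n)%N by lia.
rewrite (apply_perm _ _ (V_perm h0)).
have hc : psi (compl x) = psi x by rewrite -(hX x) (apply_perm _ _ (@tX_perm n)) mul1r.
rewrite hc; have [->|hp] := eqVneq (psi x) 0; first by rewrite !mulr0.
have hw : ~~ odd (wt x).
  apply/negP => ho; move: (hZ x); rewrite (apply_perm _ _ (@tZ_perm n)) -signr_odd ho expr1 mulN1r.
  by move=> /eqP; rewrite eqNr (negbTE hp).
by rewrite phase.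
Qed.

Lemma w_compl (x : basis n) : (0 < n)%N -> w (compl x) = w x.
Proof.
move=> h0; apply: eq_big_nat => j /andP[_ hj].
rewrite /u !xbC ?addNb ?addbN ?negbK //; lia.
Qed.

End Main2.

Unset Implicit Arguments.
Theorem mainTheorem4 (n : nat) (hn : (4 <= n)%N) (heven : ~~ odd n) :
  (forall psi : state n, inCode psi -> inCode (apply (Vop n) psi)) /\
  exists (a b : nat -> bool) (c : algC),
    `|c| = 1 /\
    forall psi : state n, inCode psi ->
      forall x, apply (Vop n) psi x
              = c * apply (opmul (logPauli n a b) (allCZbar n)) psi x.
Proof.
have h1 : (1 < n)%N by lia.
have h0 : (0 < n)%N by lia.
split.
  move=> psi hpsi; have hk := key h1 heven hpsi.
  have [hX hZ] := hpsi.
  have hc : forall x, psi (compl x) = psi x.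
    by move=> x; rewrite -(hX x) (apply_perm _ _ (@tX_perm n)) mul1r.
  split => x.
    by rewrite (apply_perm _ _ (@tX_perm n)) mul1r !hk hc w_compl.
  rewrite (apply_perm _ _ (@tZ_perm n)) hk mulrCA; congr (_ * _).
  by rewrite -(apply_perm _ _ (@tZ_perm n)) hZ.
exists (fun _ => false), (fun _ => true), (gf ^+ n); split.
  by rewrite gfn // normrX normCi expr1n.
move=> psi hpsi x.
by rewrite (key h1 heven hpsi) (apply_perm _ _ (L_perm h1)) mulrA.
Qed.
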